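(* Let $\mathbf v\in\mathrm{GF}(q^m)^n$ have rank $r\ge0$. The rank weight enumerator of $\mathcal L=\langle\mathbf v\rangle^\perp$ depends only on $r$ and equals $$W^{\mathrm R}_{\mathcal L}(x,y)=q^{-m}\left\{\big[x+(q^m-1)y\big]^{[n]}+(q^m-1)(x-y)^{[r]}*\big[x+(q^m-1)y\big]^{[n-r]}\right\}.$$
   Context: The rank of a vector over $\mathrm{GF}(q^m)$ is the maximum number of its coordinates linearly independent over $\mathrm{GF}(q)$. $\langle\mathbf v\rangle=\{a\mathbf v:a\in\mathrm{GF}(q^m)\}$ and $\perp$ denotes the dual with respect to the standard inner product $\sum_iu_iv_i$. The rank weight enumerator of a code $\mathcal C\subseteq\mathrm{GF}(q^m)^n$ is $\sum_{\mathbf u\in\mathcal C}y^{\mathrm{rk}(\mathbf u)}x^{n-\mathrm{rk}(\mathbf u)}$. $q$-product: for homogeneous polynomials $a(x,y;m)=\sum_{i=0}^r a_i(m)y^ix^{r-i}$ and $b(x,y;m)=\sum_{j=0}^s b_j(m)y^jx^{s-j}$ with coefficients real functions of $m$ (out-of-range coefficients zero), $a*b=\sum_{u=0}^{r+s}c_u(m)y^ux^{r+s-u}$ with $c_u(m)=\sum_{i=0}^u q^{is}a_i(m)b_{u-i}(m-i)$; $q$-powers: $a^{[0]}=1$, $a^{[n]}=a^{[n-1]}*a$. The polynomial $x+(q^m-1)y$ has coefficients $1$ and $q^m-1$, and $x-y$ has coefficients $1,-1$. *)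

(* Defs.v *)
From mathcomp Require Import all_boot all_order all_algebra.
Set Implicit Arguments. Unset Strict Implicit. Unset Printing Implicit Defensive.
Import Order.TTheory GRing.Theory Num.Theory.
Local Open Scope ring_scope.

(* The field GF(q^m) is F : finFieldType with #|F| = q^m; GF(q) is its
   subfield {x | x^q = x}. Vectors of GF(q^m)^n are {ffun 'I_n -> F}. *)

Section Rank.
Variables (F : finFieldType) (q n : nat).

Definition coords_indep (v : {ffun 'I_n -> F}) (S : {set 'I_n}) : bool :=
  [forall c : {ffun 'I_n -> F},
     ([forall i in S, c i ^+ q == c i] && (\sum_(i in S) c i * v i == 0))
     ==> [forall i in S, c i == 0]].

Definition rk (v : {ffun 'I_n -> F}) : nat :=
  \max_(S : {set 'I_n} | coords_indep v S) #|S|.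

Definition dotp (u v : {ffun 'I_n -> F}) : F := \sum_i u i * v i.
Definition dual_line (v : {ffun 'I_n -> F}) : {set {ffun 'I_n -> F}} :=
  [set u | dotp u v == 0].
End Rank.

(* Homogeneous polynomials sum_i a_i(m) y^i x^(r-i), coefficients being
   functions of m (m an integer, values rational). Represented as the
   pair (r, a); coefficients outside 0..r are zero. *)
Definition hpoly := (nat * (nat -> int -> rat))%type.

Definition hcoef (a : hpoly) (i : nat) (m : int) : rat :=
  if (i <= a.1)%N then a.2 i m else 0.

Definition qprod (q : nat) (a b : hpoly) : hpoly :=
  ((a.1 + b.1)%N,
  fun u m => \sum_(i < u.+1) (q%:R : rat) ^+ (i * b.1) * hcoef a i m
                               * hcoef b (u - i) (m - i%:Z)).

Fixpoint qpow (q : nat) (a : hpoly) (n : nat) : hpoly :=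
  match n with
  | 0 => (0%N, fun _ _ => 1)
  | k.+1 => qprod q (qpow q a k) a
  end.

Definition hadd (a b : hpoly) : hpoly :=
  (maxn a.1 b.1, fun i m => hcoef a i m + hcoef b i m).
Definition hscale (c : int -> rat) (a : hpoly) : hpoly :=
  (a.1, fun i m => c m * hcoef a i m).

Definition hA (q : nat) : hpoly :=
  (1%N, fun i m => if i == 0%N then 1 else (q%:R : rat) ^ m - 1).
Definition hD : hpoly := (1%N, fun i _ => if i == 0%N then 1 else -1).

Definition rank_wenum (F : finFieldType) (q n : nat)
  (C : {set {ffun 'I_n -> F}}) : hpoly :=
  (n, fun i _ => (#|[set u in C | rk q u == i]|)%:R).

(* Main.v *)
Require Import Defs.
From mathcomp Require Import all_boot all_order all_algebra all_fingroup all_solvable all_field.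
From mathcomp Require Import zify ring lra.
Set Implicit Arguments. Unset Strict Implicit. Unset Printing Implicit Defensive.
Import Order.TTheory GRing.Theory Num.Theory.
Local Open Scope ring_scope.


Section FieldFacts.
Variables (F : finFieldType) (q m : nat).
Hypotheses (hq : (1 < q)%N) (hm : (0 < m)%N) (hF : #|F| = (q ^ m)%N).

Lemma pcharnat_q : ([pchar F]).-nat q.
Proof.
have [p pp pc] := finPcharP F.
have pg : pgroup p [set: F] := abelem_pgroup (fin_ring_pchar_abelem pc).
have pq : p.-nat q.
  apply: pnat_dvd pg; rewrite cardsT hF.
  by rewrite -(prednK hm) expnS dvdn_mulr.
by rewrite (eq_pnat _ (pcharf_eq pc)).
Qed.

Lemma frobD (a b : F) : (a + b) ^+ q = a ^+ q + b ^+ q.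
Proof. exact: exprDn_pchar pcharnat_q. Qed.

Lemma frobN (a : F) : (- a) ^+ q = - a ^+ q.
Proof.
apply/eqP; rewrite -subr_eq0 opprK -frobD addNr expr0n.
by case: q hq.
Qed.

Definition Kq : {set F} := [set x : F | x ^+ q == x].

Lemma dvd_qm1 k : (q.-1 %| (q ^ k).-1)%N.
Proof.
elim: k => [|k IH]; first by rewrite expn0 dvdn0.
have h1 : (0 < q ^ k)%N by rewrite expn_gt0 ltnW.
have -> : ((q ^ k.+1).-1 = q * (q ^ k).-1 + q.-1)%N.
  rewrite expnS; move: h1 (ltnW hq); set X := (q ^ k)%N; move=> h1 h2.
  by rewrite -!subn1; nia.
by rewrite dvdn_add // dvdn_mull.
Qed.

Lemma card_Kq : #|Kq| = q.
Proof.
pose P : {poly F} := 'X^q - 'X.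
have q0 : (0 < q)%N by apply: ltnW.
have sP : size P = q.+1.
  have sX : size ('X^q : {poly F}) = q.+1 by exact: size_polyXn.
  rewrite /P size_polyDl sX // size_polyN size_polyX. by [].
have hdvd : P %| \prod_x ('X - x%:P).
  rewrite -finField_genPoly hF.
  have [b hb] := dvdnP (dvd_qm1 m).
  have eq1 : q = (q.-1).+1 by rewrite prednK.
  have eq2 : (q ^ m)%N = ((q.-1 * b).+1)%N.
    by rewrite mulnC -hb prednK // expn_gt0 q0.
  rewrite /P eq2 {1}eq1 !exprS -[X in _ %| _ - X]mulr1 -[X in _ - X %| _]mulr1.
  rewrite -!mulrBr dvdp_mul2l ?polyX_eq0 //.
  rewrite exprM -[X in _ %| _ - X](expr1n _ b) subrXX.
  exact: dvdp_mulr.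
have [ms Hms] := dvdp_prod_XsubC hdvd.
set s := mask ms _ in Hms.
have us : uniq s by apply: mask_uniq; apply: index_enum_uniq.
have ss : size s = q.
  by have := eqp_size Hms; rewrite size_prod_XsubC sP => -[].
rewrite -ss -(card_uniqP us); apply: eq_card => x.
rewrite inE -(root_prod_XsubC s x) -(eqp_root Hms x) /P rootE !hornerE subr_eq0.
by [].
Qed.
End FieldFacts.


Section Poly.
Variable q : nat.
Hypothesis hq : (0 < q)%N.
Local Notation Q := (q%:R : rat).

Lemma Q0 : Q != 0. Proof. by rewrite pnatr_eq0 -lt0n. Qed.

Lemma hcoef_out (a : hpoly) i m : (a.1 < i)%N -> hcoef a i m = 0.
Proof. by rewrite /hcoef ltnNge => /negPf->. Qed.

Lemma hcoef_qprod (a b : hpoly) u m :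
  hcoef (qprod q a b) u m =
  \sum_(i < u.+1) Q ^+ (i * b.1) * hcoef a i m * hcoef b (u - i) (m - i%:Z).
Proof.
rewrite {1}/hcoef /=; case: ifP => // hu; symmetry; apply: big1 => i _.
case: (leqP i a.1) => hi; last by rewrite hcoef_out // mulr0 mul0r.
rewrite [hcoef b _ _]hcoef_out ?mulr0 //; apply/negPn/negP; rewrite -leqNgt => h.
by move/negP: hu; apply; lia.
Qed.

Lemma hcoef_hadd a b i m : hcoef (hadd a b) i m = hcoef a i m + hcoef b i m.
Proof.
rewrite {1}/hcoef /=; case: ifP => // /negbT; rewrite -ltnNge gtn_max => /andP[h1 h2].
by rewrite !hcoef_out ?addr0.
Qed.

Lemma hcoef_hscale c a i m : hcoef (hscale c a) i m = c m * hcoef a i m.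
Proof.
rewrite {1}/hcoef /=; case: ifP => // /negbT; rewrite -ltnNge => h.
by rewrite hcoef_out ?mulr0.
Qed.

Lemma hcoef_one i m : hcoef (0%N, fun _ _ => 1) i m = (i == 0%N)%:R.
Proof. by rewrite /hcoef /=; case: i. Qed.

Lemma qprod_one_r x u m : hcoef (qprod q x (0%N, fun _ _ => 1)) u m = hcoef x u m.
Proof.
rewrite hcoef_qprod big_ord_recr /= big1 ?add0r => [|i _].
  by rewrite subnn hcoef_one mulr1 muln0 expr0 mul1r.
rewrite hcoef_one subn_eq0 leqNgt ltn_ord /= mulr0 //.
Qed.

Lemma qprod_one_l x u m : hcoef (qprod q (0%N, fun _ _ => 1) x) u m = hcoef x u m.
Proof.
rewrite hcoef_qprod big_ord_recl /= big1 ?addr0 => [|i _].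
  by rewrite hcoef_one mul0n expr0 !mul1r subn0.
by rewrite /bump /hcoef /= mulr0 mul0r.
Qed.

Lemma qprod_A x k m :
  hcoef (qprod q x (hA q)) k.+1 m =
  Q ^+ k.+1 * hcoef x k.+1 m + (Q ^ m - Q ^+ k) * hcoef x k m.
Proof.
rewrite hcoef_qprod big_ord_recr big_ord_recr /= big1 ?add0r => [|i _].
  rewrite subnn subSn // subnn !muln1.
  have -> : hcoef (hA q) 1 (m - k%:Z) = Q ^ (m - k%:Z) - 1 by [].
  have -> : hcoef (hA q) 0 (m - (k.+1)%:Z) = 1 by [].
  have e : Q ^+ k * (Q ^ (m - k%:Z) - 1) = Q ^ m - Q ^+ k.
    by rewrite mulrBr mulr1 exprnP -expfzDr ?Q0 // (addrC (Posz k)) subrK.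
  by rewrite mulr1 addrC -e; ring.
rewrite [hcoef (hA q) _ _]hcoef_out ?mulr0 //=.
have := ltn_ord i; lia.
Qed.

Lemma qprod_D x k m :
  hcoef (qprod q x hD) k.+1 m = Q ^+ k.+1 * hcoef x k.+1 m - Q ^+ k * hcoef x k m.
Proof.
rewrite hcoef_qprod big_ord_recr big_ord_recr /= big1 ?add0r => [|i _].
  rewrite subnn subSn // subnn !muln1.
  have -> : hcoef hD 1 (m - k%:Z) = -1 by [].
  have -> : hcoef hD 0 (m - (k.+1)%:Z) = 1 by [].
  ring.
rewrite [hcoef hD _ _]hcoef_out ?mulr0 //=.
have := ltn_ord i; lia.
Qed.

Lemma qprod_0 x (y : hpoly) m : y.1 = 1%N -> hcoef y 0 m = 1 ->
  hcoef (qprod q x y) 0 m = hcoef x 0 m.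
Proof.
move=> h1 h2; rewrite hcoef_qprod big_ord1 /= mul0n expr0 mul1r subn0.
have -> : m - Posz 0 = m by rewrite subr0.
by rewrite h2 mulr1.
Qed.

Lemma qprod_assoc a b c u m :
  hcoef (qprod q a (qprod q b c)) u m = hcoef (qprod q (qprod q a b) c) u m.
Proof.
pose f (k i : nat) := if (k <= i)%N then Q ^+ (k * b.1 + i * c.1) * hcoef a k m *
  hcoef b (i - k) (m - k%:Z) * hcoef c (u - i) (m - i%:Z) else 0.
transitivity (\sum_(k < u.+1) \sum_(i < u.+1) f k i).
  rewrite hcoef_qprod; apply: eq_bigr => k _.
  have hk : (k <= u)%N by rewrite -ltnS.
  have -> : \sum_(i < u.+1) f k i = \sum_(j < (u - k).+1) f k (addn j k).
    rewrite -(big_mkord xpredT (f k)) (@big_cat_nat _ _ _ k) //=; last by apply: leqW.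
    rewrite big_nat_cond big1 ?add0r => [|i /andP[/andP[_ hi] _]]; last first.
      by rewrite /f leqNgt hi.
    rewrite -{1}(add0n k) big_addn subSn // big_mkord.
    by [].
  rewrite hcoef_qprod /= mulr_sumr; apply: eq_bigr => j _.
  rewrite /f leq_addl addnK.
  have -> : (u - (j + k) = u - k - j)%N by rewrite addnC subnDA.
  have -> : m - (Posz (addn j k)) = m - k%:Z - j%:Z by rewrite PoszD; ring.
  rewrite mulnDr mulnDl !exprD; ring.
rewrite exchange_big hcoef_qprod; apply: eq_bigr => i _.
rewrite hcoef_qprod mulr_sumr mulr_suml.
have -> : \sum_(k < u.+1) f k i = \sum_(k < i.+1) f k i.
  rewrite (big_ord_widen _ (fun k => f k i) (ltn_ord i)) [RHS]big_mkcond /=.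
  by apply: eq_bigr => k _; rewrite ltnS /f; case: (k <= i)%N.
apply: eq_bigr => k _; rewrite /f -ltnS ltn_ord.
rewrite exprD; ring.
Qed.


Section Rec.
Variable m : nat.
Local Notation M := (Q ^+ m).
Definition aa n i := hcoef (qpow q (hA q) n) i m%:Z.
Definition dd r i := hcoef (qpow q hD r) i m%:Z.
Definition ee r k i := hcoef (qprod q (qpow q hD r) (qpow q (hA q) k)) i m%:Z.
Definition TT n r i := Q ^- m * (aa n i + (M - 1) * ee r (n - r) i).

Lemma M0 : M != 0. Proof. by rewrite expf_neq0 // Q0. Qed.

Lemma aa_S n k : aa n.+1 k.+1 = Q ^+ k.+1 * aa n k.+1 + (M - Q ^+ k) * aa n k.
Proof. by rewrite /aa /= qprod_A. Qed.
Lemma aa_S0 n : aa n.+1 0 = aa n 0.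
Proof. by rewrite /aa /= qprod_0. Qed.
Lemma dd_S r k : dd r.+1 k.+1 = Q ^+ k.+1 * dd r k.+1 - Q ^+ k * dd r k.
Proof. by rewrite /dd /= qprod_D. Qed.
Lemma dd_S0 r : dd r.+1 0 = dd r 0.
Proof. by rewrite /dd /= qprod_0. Qed.
Lemma ee_S r k i : ee r k.+1 i.+1 = Q ^+ i.+1 * ee r k i.+1 + (M - Q ^+ i) * ee r k i.
Proof. by rewrite /ee /= qprod_assoc qprod_A. Qed.
Lemma ee_S0 r k : ee r k.+1 0 = ee r k 0.
Proof. by rewrite /ee /= qprod_assoc qprod_0. Qed.
Lemma ee_0 r i : ee r 0 i = dd r i.
Proof. by rewrite /ee /= qprod_one_r. Qed.
Lemma ee0 k i : ee 0 k i = aa k i.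
Proof. by rewrite /ee /= qprod_one_l. Qed.

Lemma TT_0 i : TT 0 0 i = (i == 0%N)%:R.
Proof.
rewrite /TT ee_0 /aa /dd /= !hcoef_one; case: (i == 0%N); last by rewrite !mulr0.
by rewrite mulr1 addrC subrK mulVf ?M0.
Qed.

Lemma TT_A n r i : (r <= n)%N ->
  TT n.+1 r i.+1 = Q ^+ i.+1 * TT n r i.+1 + (M - Q ^+ i) * TT n r i.
Proof.
move=> h; rewrite /TT subSn // aa_S ee_S; ring.
Qed.
Lemma TT_A0 n r : (r <= n)%N -> TT n.+1 r 0 = TT n r 0.
Proof. by move=> h; rewrite /TT subSn // aa_S0 ee_S0. Qed.

Lemma TT_B n i :
  TT n.+1 n.+1 i.+1 = Q ^+ i.+1 * TT n n i.+1 + (aa n i - Q ^+ i * TT n n i).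
Proof.
rewrite /TT !subnn !ee_0 aa_S dd_S.
have hM := M0; have hQ := Q0; field; exact: hM.
Qed.
Lemma TT_B0 n : TT n.+1 n.+1 0 = TT n n 0.
Proof. by rewrite /TT !subnn !ee_0 aa_S0 dd_S0. Qed.

Lemma TT_N n i : TT n 0 i = aa n i.
Proof. by rewrite /TT subn0 ee0; have hM := M0; field. Qed.
End Rec.
End Poly.


Section Span.
Variables (F : finFieldType) (q : nat).
Hypotheses (hq : (1 < q)%N) (hfrob : forall a b : F, (a + b) ^+ q = a ^+ q + b ^+ q).
Definition K : {set F} := [set x : F | x ^+ q == x].
Hypothesis hK : #|K| = q.

Lemma q0 : (0 < q)%N. Proof. exact: ltnW. Qed.

Lemma K0 : (0 : F) \in K.
Proof. by rewrite inE expr0n; case: q hq. Qed.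
Lemma K1 : (1 : F) \in K.
Proof. by rewrite inE expr1n. Qed.
Lemma KD a b : a \in K -> b \in K -> a + b \in K.
Proof. by rewrite !inE hfrob => /eqP-> /eqP->. Qed.
Lemma KN a : a \in K -> - a \in K.
Proof.
rewrite !inE => /eqP ha; apply/eqP.
have : (- a + a) ^+ q = 0 by rewrite addNr expr0n; case: q hq.
by rewrite hfrob ha => /eqP; rewrite addr_eq0 => /eqP.
Qed.
Lemma KB a b : a \in K -> b \in K -> a - b \in K.
Proof. by move=> ha hb; apply: KD => //; apply: KN. Qed.
Lemma KM a b : a \in K -> b \in K -> a * b \in K.
Proof. by rewrite !inE exprMn => /eqP-> /eqP->. Qed.
Lemma KV a : a \in K -> a^-1 \in K.
Proof. by rewrite !inE exprVn => /eqP->. Qed.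
Lemma Ksum (I : finType) (P : pred I) (f : I -> F) :
  (forall i, P i -> f i \in K) -> \sum_(i | P i) f i \in K.
Proof.
move=> h; apply: (big_ind (fun x => x \in K)) => //; [exact: K0 | exact: KD].
Qed.

Section N.
Variable n : nat.
Implicit Types u c : {ffun 'I_n -> F}.

Definition Kn : {set {ffun 'I_n -> F}} := [set c : {ffun 'I_n -> F} | [forall i, c i \in K]].

Lemma card_Kn : #|Kn| = (q ^ n)%N.
Proof.
rewrite -hK -[n in RHS]card_ord -card_ffun_on; apply: eq_card => c.
rewrite inE; apply/forallP/ffun_onP => h i; exact: h.
Qed.

Lemma KnP c : reflect (forall i, c i \in K) (c \in Kn).
Proof. by rewrite inE; apply: forallP. Qed.

Definition lc u c : F := \sum_i c i * u i.
Definition span u : {set F} := [set lc u c | c in Kn].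

Definition Kclosed (X : {set F}) :=
  [/\ 0 \in X, forall a b, a \in X -> b \in X -> a + b \in X
    & forall t a, t \in K -> a \in X -> t * a \in X].

Lemma Kclosed_sum (X : {set F}) (I : finType) (P : pred I) (f : I -> F) :
  Kclosed X -> (forall i, P i -> f i \in X) -> \sum_(i | P i) f i \in X.
Proof.
case=> X0 XD _ h; apply: (big_ind (fun x => x \in X)) => //.
Qed.

Lemma Kclosed_lc (X : {set F}) u c :
  Kclosed X -> (forall i, u i \in X) -> c \in Kn -> lc u c \in X.
Proof.
move=> hX hu /KnP hc; apply: Kclosed_sum => // i _.
by case: hX => _ _ ->.
Qed.

Definition fadd c1 c2 : {ffun 'I_n -> F} := [ffun k => c1 k + c2 k].
Definition fscal t c : {ffun 'I_n -> F} := [ffun k => t * c k].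
Definition delta (i : 'I_n) : {ffun 'I_n -> F} := [ffun k => (k == i)%:R].

Lemma lc_add u c1 c2 : lc u (fadd c1 c2) = lc u c1 + lc u c2.
Proof. by rewrite /lc -big_split; apply: eq_bigr => k _; rewrite ffunE mulrDl. Qed.
Lemma lc_scal u t c : lc u (fscal t c) = t * lc u c.
Proof. by rewrite /lc mulr_sumr; apply: eq_bigr => k _; rewrite ffunE mulrA. Qed.
Lemma lc_delta u i : lc u (delta i) = u i.
Proof.
rewrite /lc (bigD1 i) //= big1 ?addr0 => [|k hk]; rewrite ffunE ?eqxx ?mul1r //.
by rewrite (negPf hk) mul0r.
Qed.

Lemma Kn_add c1 c2 : c1 \in Kn -> c2 \in Kn -> fadd c1 c2 \in Kn.
Proof. by move=> /KnP h1 /KnP h2; apply/KnP => i; rewrite ffunE KD. Qed.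
Lemma Kn_scal t c : t \in K -> c \in Kn -> fscal t c \in Kn.
Proof. by move=> ht /KnP h; apply/KnP => i; rewrite ffunE KM. Qed.
Lemma Kn_delta i : delta i \in Kn.
Proof. by apply/KnP => k; rewrite ffunE; case: (k == i); [exact: K1 | exact: K0]. Qed.
Lemma Kn0 : (0 : {ffun 'I_n -> F}) \in Kn.
Proof. by apply/KnP => k; rewrite ffunE K0. Qed.

Lemma span_closed u : Kclosed (span u).
Proof.
split.
- apply/imsetP; exists [ffun _ => 0]; first by apply/KnP => k; rewrite ffunE K0.
  by rewrite /lc big1 // => k _; rewrite ffunE mul0r.
- move=> a b /imsetP[c1 h1 ->] /imsetP[c2 h2 ->]; apply/imsetP.
  by exists (fadd c1 c2); [exact: Kn_add | rewrite lc_add].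
- move=> t a ht /imsetP[c h ->]; apply/imsetP.
  by exists (fscal t c); [exact: Kn_scal | rewrite lc_scal].
Qed.

Lemma span_coord u i : u i \in span u.
Proof. by apply/imsetP; exists (delta i); [exact: Kn_delta | rewrite lc_delta]. Qed.

Lemma span_sub u (X : {set F}) : Kclosed X -> (forall i, u i \in X) -> span u \subset X.
Proof. by move=> hX hu; apply/subsetP => _ /imsetP[c hc ->]; apply: Kclosed_lc. Qed.

Lemma PSP (S : {set 'I_n}) c :
  reflect (forall k, if k \in S then c k \in K else c k == 0) (c \in pffun_on 0 S K).
Proof.
apply: (iffP familyP) => h k; have := h k; case: (k \in S) => //=; by rewrite inE.
Qed.

Lemma PS_Kn (S : {set 'I_n}) c : c \in pffun_on 0 S K -> c \in Kn.
Proof.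
move/PSP => h; apply/KnP => k; have := h k; case: (k \in S) => // /eqP->; exact: K0.
Qed.

Lemma lc_PS (S : {set 'I_n}) u c : c \in pffun_on 0 S K -> lc u c = \sum_(i in S) c i * u i.
Proof.
move/PSP => h; rewrite /lc [RHS]big_mkcond; apply: eq_bigr => k _.
by have := h k; case: (k \in S) => // /eqP->; rewrite mul0r.
Qed.

Lemma PS_add (S : {set 'I_n}) c1 c2 : c1 \in pffun_on 0 S K -> c2 \in pffun_on 0 S K ->
  fadd c1 c2 \in pffun_on 0 S K.
Proof.
move=> /PSP h1 /PSP h2; apply/PSP => k; rewrite ffunE; have := h1 k; have := h2 k.
by case: (k \in S) => [? ?|/eqP-> /eqP->]; [apply: KD | rewrite addr0].
Qed.

Lemma PS_scal (S : {set 'I_n}) t c : t \in K -> c \in pffun_on 0 S K -> fscal t c \in pffun_on 0 S K.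
Proof.
move=> ht /PSP h; apply/PSP => k; rewrite ffunE; have := h k.
by case: (k \in S) => [|/eqP->]; [exact: KM | rewrite mulr0].
Qed.

Lemma rk_span u : (q ^ rk q u)%N = #|span u|.
Proof.
have ne : (0 < #|[pred S : {set 'I_n} | coords_indep q u S]|)%N.
  apply/card_gt0P; exists set0; rewrite inE /coords_indep; apply/forallP => c.
  by apply/implyP => _; apply/forall_inP => i; rewrite inE.
have [S HS Hmax] := eq_bigmax_cond (fun S : {set 'I_n} => #|S|) ne.
rewrite inE in HS.
have rkE : rk q u = #|S|.
  by rewrite /rk -Hmax; apply: eq_bigl => T; rewrite inE.
pose spS := [set lc u c | c in pffun_on 0 S K].
have injS : {in pffun_on 0 S K &, injective (lc u)}.
  move=> c1 c2 h1 h2 e.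
  pose d := fadd c1 (fscal (-1) c2).
  have hd : d \in pffun_on 0 S K by apply: PS_add => //; apply: PS_scal => //; apply/KN/K1.
  have dE k : d k = c1 k - c2 k by rewrite !ffunE mulN1r.
  have := forallP HS d; rewrite -(lc_PS u hd) /d lc_add lc_scal e mulN1r addrN eqxx andbT.
  move/implyP => H.
  have : [forall i in S, d i ^+ q == d i].
    apply/forall_inP => k kS; move/PSP: hd => /(_ k); rewrite kS inE.
    by [].
  move/H/forall_inP => H2; apply/ffunP => k.
  case kS: (k \in S); first by have := H2 k kS; rewrite dE subr_eq0 => /eqP.
  move/PSP: h1 => /(_ k); move/PSP: h2 => /(_ k); rewrite kS => /eqP-> /eqP->.
  by [].
have cardS : #|spS| = (q ^ #|S|)%N.
  by rewrite card_in_imset // card_pffun_on hK.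
suff -> : span u = spS by rewrite rkE cardS.
apply/eqP; rewrite eqEsubset; apply/andP; split; last first.
  by apply/subsetP => _ /imsetP[c hc ->]; apply/imsetP; exists c => //; apply: PS_Kn hc.
apply: span_sub.
  split.
  - apply/imsetP; exists 0; last by rewrite /lc big1 // => k _; rewrite ffunE mul0r.
    by apply/PSP => k; rewrite ffunE; case: (k \in S) => //; exact: K0.
  - move=> a b /imsetP[c1 h1 ->] /imsetP[c2 h2 ->]; apply/imsetP.
    by exists (fadd c1 c2); [exact: PS_add | rewrite lc_add].
  - move=> t a ht /imsetP[c h ->]; apply/imsetP.
    by exists (fscal t c); [exact: PS_scal | rewrite lc_scal].
move=> i.
case iS: (i \in S).
  apply/imsetP; exists (delta i); last by rewrite lc_delta.
  apply/PSP => k; rewrite ffunE; case: eqP => [->|_]; rewrite ?iS; [exact: K1|].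
  by case: (k \in S) => //; exact: K0.
apply: contraT => hn; exfalso.
have Hind : coords_indep q u (i |: S).
  apply/forallP => c; apply/implyP => /andP[/forall_inP hc /eqP hs].
  rewrite big_setU1 /= ?iS // in hs.
  have cK k : k \in i |: S -> c k \in K by move=> kk; rewrite inE; apply: hc.
  have ci0 : c i = 0.
    apply/eqP; apply: contraR hn => hci.
    have ciK : c i \in K by apply: cK; rewrite setU11.
    apply/imsetP; exists [ffun k => if k \in S then - (c i)^-1 * c k else 0].
      apply/PSP => k; rewrite ffunE; case kS: (k \in S) => //.
      apply: KM; first by apply/KN/KV.
      by apply: cK; rewrite inE kS orbT.
    rewrite /lc (eq_bigr (fun k => if k \in S then - (c i)^-1 * (c k * u k) else 0)).
      rewrite -big_mkcond /= -mulr_sumr.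
      have -> : \sum_(k in S) c k * u k = - (c i * u i) by apply/eqP; rewrite -addr_eq0 addrC hs.
      by rewrite mulrN mulNr opprK mulrA mulVf // mul1r.
    by move=> k _; rewrite ffunE; case: (k \in S); rewrite ?mulrA ?mul0r.
  rewrite ci0 mul0r add0r in hs.
  have : [forall k in S, c k ^+ q == c k].
    by apply/forall_inP => k kS; apply: hc; rewrite inE kS orbT.
  move=> h1; have := forallP HS c; rewrite h1 hs eqxx /= => /forall_inP H.
  apply/forall_inP => k; rewrite !inE => /orP[/eqP->|kS]; first by rewrite ci0.
  exact: H.
have := @leq_bigmax_cond _ (coords_indep q u) (fun T : {set 'I_n} => #|T|) _ Hind.
by rewrite -/(rk q u) rkE cardsU1 iS ltnn.
Qed.

Lemma rk_le u : (rk q u <= n)%N.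
Proof.
rewrite -(leq_exp2l _ _ hq) rk_span -card_Kn.
by apply: leq_trans (leq_imset_card _ _) _; apply: subset_leq_card; apply/subsetP.
Qed.

End N.

Section Ext.
Variables (n : nat) (j : 'I_n.+1).
Implicit Types (u c w : {ffun 'I_n -> F}) (v : {ffun 'I_n.+1 -> F}).

Definition ext u (y : F) : {ffun 'I_n.+1 -> F} :=
  [ffun k => if unlift j k is Some k' then u k' else y].
Definition rem v : {ffun 'I_n -> F} := [ffun k => v (lift j k)].

Lemma ext_j u y : ext u y j = y.
Proof. by rewrite ffunE unlift_none. Qed.
Lemma ext_lift u y k : ext u y (lift j k) = u k.
Proof. by rewrite ffunE liftK. Qed.
Lemma rem_ext u y : rem (ext u y) = u.
Proof. by apply/ffunP => k; rewrite ffunE ext_lift. Qed.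
Lemma ext_rem v : ext (rem v) (v j) = v.
Proof.
apply/ffunP => k; rewrite ffunE; case: unliftP => [k' ->|->] //.
by rewrite ffunE.
Qed.
Lemma ext_inj u1 y1 u2 y2 : ext u1 y1 = ext u2 y2 -> u1 = u2 /\ y1 = y2.
Proof.
move=> e; split; first by rewrite -(rem_ext u1 y1) e rem_ext.
by rewrite -(ext_j u1 y1) e ext_j.
Qed.

Lemma sum_lift (f : 'I_n.+1 -> F) : \sum_i f i = f j + \sum_(k < n) f (lift j k).
Proof. by rewrite (bigD1_ord j). Qed.

Lemma lc_ext u y (c : {ffun 'I_n.+1 -> F}) : lc (ext u y) c = c j * y + lc u (rem c).
Proof.
rewrite /lc sum_lift ext_j; congr (_ + _); apply: eq_bigr => k _.
by rewrite ext_lift ffunE.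
Qed.

Lemma dotp_ext u y w x : dotp (ext u y) (ext w x) = y * x + dotp u w.
Proof.
rewrite /dotp sum_lift !ext_j; congr (_ + _); apply: eq_bigr => k _.
by rewrite !ext_lift.
Qed.

Lemma Kn_ext c t : (ext c t \in Kn (n.+1)) = (c \in Kn n) && (t \in K).
Proof.
apply/KnP/andP => [h|[/KnP h1 ht] k].
  by split; [apply/KnP => k; rewrite -(ext_lift c t) | rewrite -(ext_j c t)].
rewrite ffunE; case: (unlift j k) => //.
Qed.

Lemma Kn_rem (c : {ffun 'I_n.+1 -> F}) : c \in Kn n.+1 -> rem c \in Kn n /\ c j \in K.
Proof. by rewrite -{1}(ext_rem c) Kn_ext => /andP. Qed.

Lemma span_extP u y z :
  reflect (exists2 t, t \in K & z - t * y \in span u) (z \in span (ext u y)).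
Proof.
apply: (iffP imsetP) => [[c hc ->]|[t ht /imsetP[c hc e]]].
  have [h1 h2] := Kn_rem hc.
  exists (c j) => //; rewrite lc_ext (addrC (c j * y)) addrK; apply/imsetP; by exists (rem c).
exists (ext c t); first by rewrite Kn_ext hc ht.
by rewrite lc_ext ext_j rem_ext -e addrC subrK.
Qed.

Lemma span_ext_in u y : y \in span u -> span (ext u y) = span u.
Proof.
move=> hy; have [S0 SD SM] := span_closed u.
apply/setP => z; apply/span_extP/idP => [[t ht hz]|hz].
  by rewrite -(subrK (t * y) z); apply: SD => //; apply: SM.
by exists 0; [exact: K0 | rewrite mul0r subr0].
Qed.

Lemma card_span_ext u y : y \notin span u -> #|span (ext u y)| = (q * #|span u|)%N.
Proof.
move=> hy; have [S0 SD SM] := span_closed u.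
have -> : span (ext u y) = [set p.1 + p.2 * y | p in setX (span u) K].
  apply/setP => z; apply/span_extP/imsetP => [[t ht hz]|[[s t] /setXP[hs ht] ->]].
    by exists (z - t * y, t); [rewrite inE /= hz ht | rewrite /= subrK].
  by exists t => //=; rewrite addrK.
rewrite card_in_imset ?cardsX ?hK 1?mulnC //.
move=> [s1 t1] [s2 t2] /setXP[h1 k1] /setXP[h2 k2] /= e.
have et : t1 = t2.
  apply/eqP; apply: contraR hy => nt.
  have : (t1 - t2) * y = s2 - s1.
    by transitivity ((s1 + t1 * y) - s1 - t2 * y); [ring | rewrite e; ring].
  move/(congr1 (fun x => (t1 - t2)^-1 * x)); rewrite mulrA mulVf ?subr_eq0 // mul1r => ->.
  apply: SM; first by apply/KV/KB.
  have [_ _ SM'] := span_closed u.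
  by apply: SD => //; rewrite -mulN1r; apply: SM' => //; apply/KN/K1.
by rewrite et in e *; move/addIr: e => ->.
Qed.

Lemma expq_inj a b : (q ^ a)%N = (q ^ b)%N -> a = b.
Proof. by move/eqP; rewrite eqn_exp2l // => /eqP. Qed.

Lemma rk_ext u y : rk q (ext u y) = if y \in span u then rk q u else (rk q u).+1.
Proof.
apply: expq_inj; rewrite rk_span; case: ifP => hy.
  by rewrite span_ext_in // rk_span.
by rewrite card_span_ext ?hy // expnS rk_span.
Qed.

Definition shift u y c0 : {ffun 'I_n -> F} := [ffun k => u k + y * c0 k].

Lemma lc_shift u y c0 c : lc (shift u y c0) c = lc u c + y * \sum_k c k * c0 k.
Proof.
rewrite /lc mulr_sumr -big_split; apply: eq_bigr => k _.
by rewrite ffunE mulrDr; congr (_ + _); rewrite mulrCA.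
Qed.

Lemma span_shift_sub u y c0 : c0 \in Kn n ->
  span (ext (shift u y c0) y) \subset span (ext u y).
Proof.
move=> /KnP h0; apply/subsetP => z /span_extP[t ht /imsetP[c hc e]].
apply/span_extP; exists (t + \sum_k c k * c0 k).
  apply: KD => //; apply: Ksum => k _; apply: KM => //; by move/KnP: hc.
apply/imsetP; exists c => //; move: e; rewrite lc_shift => e.
by rewrite mulrDl opprD addrA e (mulrC y) addrK.
Qed.

Lemma span_shift u y c0 : c0 \in Kn n ->
  span (ext (shift u y c0) y) = span (ext u y).
Proof.
move=> h; apply/eqP; rewrite eqEsubset span_shift_sub //=.
have e : u = shift (shift u y c0) y (fscal (-1) c0).
  by apply/ffunP => k; rewrite !ffunE mulN1r mulrN addrK.
rewrite {1}e; apply: span_shift_sub; apply: Kn_scal h; apply/KN/K1.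
Qed.

Lemma rk_shift u y c0 : c0 \in Kn n ->
  rk q (ext (shift u y c0) y) = rk q (ext u y).
Proof. by move=> h; apply: expq_inj; rewrite !rk_span span_shift. Qed.

End Ext.

Variable m : nat.
Hypothesis hFm : #|F| = (q ^ m)%N.
Local Notation Q := (q%:R : rat).
Local Notation M := (Q ^+ m).

Definition Zc n (v : {ffun 'I_n -> F}) (i : nat) : rat :=
  \sum_(u : {ffun 'I_n -> F}) ((dotp u v == 0) && (rk q u == i))%:R.

Lemma sum_ext n (j : 'I_n.+1) (G : {ffun 'I_n.+1 -> F} -> rat) :
  \sum_v G v = \sum_(u : {ffun 'I_n -> F}) \sum_(y : F) G (ext j u y).
Proof.
rewrite pair_big /= (reindex (fun p : {ffun 'I_n -> F} * F => ext j p.1 p.2)) //=.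
exists (fun v => (rem j v, v j)) => [[u y] _ | v _] /=.
  by rewrite rem_ext ext_j.
exact: ext_rem.
Qed.

Lemma sum_if (S : {set F}) (a b : rat) :
  \sum_(y : F) (if y \in S then a else b) = #|S|%:R * a + (M - #|S|%:R) * b.
Proof.
rewrite (bigID (mem S)) /=.
rewrite (eq_bigr (fun _ => a)) => [|y ->] //.
rewrite [X in _ + X](eq_bigr (fun _ => b)) => [|y /negPf ->] //.
rewrite !sumr_const.
have e : (#|S| + #|(fun i : F => i \notin S)| = q ^ m)%N.
  by rewrite -hFm -(cardC S); congr (_ + _); apply: eq_card.
move/(congr1 (fun k => k%:R : rat)): e; rewrite natrD natrX => e.
rewrite -(mulr_natl a) -(mulr_natl b).
have -> : #|(fun i : F => i \notin S)|%:R = M - #|S|%:R :> rat by rewrite -e (addrC (#|S|%:R)) addrK.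
by [].
Qed.

Lemma count_y n (j : 'I_n.+1) (u : {ffun 'I_n -> F}) i :
  \sum_(y : F) (rk q (ext j u y) == i)%:R =
  (rk q u == i)%:R * Q ^+ (rk q u) + ((rk q u).+1 == i)%:R * (M - Q ^+ (rk q u)) :> rat.
Proof.
rewrite (eq_bigr (fun y => if y \in span u then (rk q u == i)%:R else ((rk q u).+1 == i)%:R)).
  by rewrite sum_if -rk_span natrX mulrC [X in _ + X]mulrC.
by move=> y _; rewrite rk_ext; case: (y \in span u).
Qed.

Lemma dotp_shift n (u w c0 : {ffun 'I_n -> F}) y :
  dotp (shift u y c0) w = dotp u w + y * lc w c0.
Proof.
rewrite /dotp /lc mulr_sumr -big_split; apply: eq_bigr => k _.
by rewrite ffunE mulrDl mulrA.
Qed.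

Lemma shift_inj n y (c0 : {ffun 'I_n -> F}) : injective (fun u => shift u y c0).
Proof. by move=> u1 u2 /ffunP e; apply/ffunP => k; have := e k; rewrite !ffunE => /addIr. Qed.

Lemma ZcA n (j : 'I_n.+1) (w : {ffun 'I_n -> F}) x i : x \in span w ->
  Zc (ext j w x) i = \sum_(u : {ffun 'I_n -> F}) (dotp u w == 0)%:R *
    ((rk q u == i)%:R * Q ^+ (rk q u) + ((rk q u).+1 == i)%:R * (M - Q ^+ (rk q u))).
Proof.
move=> /imsetP[c0 hc0 ->].
rewrite /Zc (sum_ext j).
transitivity (\sum_(u : {ffun 'I_n -> F}) \sum_(y : F)
   ((dotp (shift u y c0) w == 0) && (rk q (ext j (shift u y c0) y) == i))%:R : rat).
  apply: eq_bigr => u _; apply: eq_bigr => y _.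
  by rewrite dotp_ext dotp_shift rk_shift // addrC.
rewrite exchange_big /=.
transitivity (\sum_(y : F) \sum_(u : {ffun 'I_n -> F})
   ((dotp u w == 0) && (rk q (ext j u y) == i))%:R : rat).
  apply: eq_bigr => y _.
  by rewrite [RHS](reindex_inj (@shift_inj n y c0)).
rewrite exchange_big /=; apply: eq_bigr => u _.
rewrite -(count_y j) mulr_sumr; apply: eq_bigr => y _.
by case: (dotp u w == 0); rewrite ?mul1r ?mul0r.
Qed.

Lemma ZcA_S n (j : 'I_n.+1) (w : {ffun 'I_n -> F}) x i : x \in span w ->
  Zc (ext j w x) i.+1 = Q ^+ i.+1 * Zc w i.+1 + (M - Q ^+ i) * Zc w i.
Proof.
move=> hx; rewrite ZcA // /Zc !mulr_sumr -big_split; apply: eq_bigr => u _ /=.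
rewrite eqSS; case: (dotp u w == 0); rewrite ?mul0r ?mulr0 ?addr0 //= mul1r.
case: eqP => [->|_]; case: eqP => [->|_]; rewrite ?mul0r ?mul1r ?add0r ?addr0 ?mulr0 ?mulr1 //.
all: by rewrite ?addr0 ?add0r.
Qed.

Lemma ZcA_0 n (j : 'I_n.+1) (w : {ffun 'I_n -> F}) x : x \in span w ->
  Zc (ext j w x) 0 = Zc w 0.
Proof.
move=> hx; rewrite ZcA // /Zc; apply: eq_bigr => u _ /=.
rewrite mul0r addr0; case: (dotp u w == 0); rewrite ?mul0r ?mul1r //=.
by case: eqP => [->|]; rewrite ?expr0 ?mulr1 ?mul0r.
Qed.
Definition fib n (u : {ffun 'I_n -> F}) (z : F) := [set c in Kn n | lc u c == z].

Lemma fibE n (u : {ffun 'I_n -> F}) z c : (c \in fib u z) = (c \in Kn n) && (lc u c == z).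
Proof. by rewrite /fib inE. Qed.

Lemma card_sum (T : finType) (A : {set T}) (P : pred T) :
  #|[set x in A | P x]|%:R = \sum_(x in A) (P x)%:R :> rat.
Proof.
rewrite -sum1_card natr_sum big_mkcond [RHS]big_mkcond /=; apply: eq_bigr => x _.
by rewrite !inE; case: (x \in A); case: (P x).
Qed.

Lemma fib_card n (u : {ffun 'I_n -> F}) z :
  (#|fib u z|%:R : rat) * Q ^+ (rk q u) = (z \in span u)%:R * Q ^+ n.
Proof.
case: (boolP (z \in span u)) => hz; last first.
  have -> : fib u z = set0.
    apply/setP => c; rewrite in_set in_set0; apply/negbTE/negP => /andP[hc /eqP e].
    by apply: (negP hz); rewrite -e; apply/imsetP; exists c.
  by rewrite cards0 !mul0r.
have fz : forall z', z' \in span u -> #|fib u z'| = #|fib u 0|.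
  move=> z' /imsetP[c1 hc1 ->].
  have -> : fib u (lc u c1) = (fun c => fadd c c1) @: fib u 0.
    apply/setP => c; apply/idP/imsetP.
    - rewrite fibE => /andP[hc /eqP e]; exists (fadd c (fscal (-1) c1)).
        rewrite fibE Kn_add //; last by apply: Kn_scal => //; apply/KN/K1.
        by rewrite lc_add lc_scal e mulN1r subrr eqxx.
      by apply/ffunP => k; rewrite !ffunE mulN1r subrK.
    - move=> [c' hc' ->]; move: hc'; rewrite !fibE => /andP[h1 /eqP h2].
      by rewrite Kn_add // lc_add h2 add0r eqxx.
  apply: card_imset => c1' c2' /ffunP e; apply/ffunP => k.
  by have := e k; rewrite !ffunE => /addIr.
have tot : (#|fib u 0%R| * #|span u| = q ^ n)%N.
  rewrite -card_Kn -[#|Kn n|]sum1_card (partition_big (lc u) (mem (span u))) /=; last first.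
    by move=> c hc; apply/imsetP; exists c.
  rewrite (eq_bigr (fun z => #|fib u 0|)) => [|z' hz'].
    by rewrite sum_nat_const mulnC.
  rewrite -(fz z' hz') -sum1_card; apply: eq_bigl => c.
  by rewrite fibE.
by rewrite fz // -natrX rk_span -natrM tot natrX mul1r.
Qed.

Lemma dotp_shift2 n (u w c : {ffun 'I_n -> F}) x :
  dotp u (shift w x c) = dotp u w + x * lc u c.
Proof.
rewrite /dotp /lc mulr_sumr -big_split; apply: eq_bigr => k _ /=.
rewrite ffunE; ring.
Qed.

Lemma solve_x (x y d : F) : x != 0 -> (y * x + d == 0) = (y == - d / x).
Proof.
move=> hx; apply/eqP/eqP => [e|->]; last by rewrite divfK // addNr.
have : y * x = - d by rewrite -[y * x](addrK d) e sub0r.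
by move=> <-; rewrite mulfK.
Qed.

Lemma solve_x2 (x c d : F) : x != 0 -> (d + x * c == 0) = (c == - d / x).
Proof. by move=> hx; rewrite addrC mulrC solve_x. Qed.

Section CaseB.
Variables (n : nat) (j : 'I_n.+1) (w : {ffun 'I_n -> F}) (x : F).
Hypotheses (hx : x \notin span w) (hw : rk q w = n).
Hypothesis IH : forall w' : {ffun 'I_n -> F}, rk q w' = n -> forall k, Zc w' k = TT q m n n k.
Hypothesis IHN : forall k, \sum_(u : {ffun 'I_n -> F}) (rk q u == k)%:R = aa q m n k.

Let x0 : x != 0.
Proof. by apply: contraNneq hx => ->; have [] := span_closed w. Qed.

Let t (u : {ffun 'I_n -> F}) := - dotp u w / x.

Let Mk k := \sum_(u : {ffun 'I_n -> F}) ((t u \in span u) && (rk q u == k))%:R : rat.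

Let step1 i : Zc (ext j w x) i =
  \sum_(u : {ffun 'I_n -> F}) (if t u \in span u then rk q u == i else (rk q u).+1 == i)%:R.
Proof.
rewrite /Zc (sum_ext j); apply: eq_bigr => u _.
rewrite (eq_bigr (fun y => if y == t u then (rk q (ext j u y) == i)%:R else 0)).
  by rewrite -big_mkcond big_pred1_eq rk_ext; case: (t u \in span u).
by move=> y _; rewrite dotp_ext solve_x //; case: (y == t u).
Qed.

Let full c : c \in Kn n -> rk q (shift w x c) = n.
Proof.
move=> hc; apply/eqP; rewrite eqn_leq rk_le /=.
have := rk_shift j w x hc; rewrite !rk_ext (negPf hx) hw.
by case: ifP => _; lia.
Qed.

Let step2 k : Q ^+ n * TT q m n n k = \sum_(u : {ffun 'I_n -> F}) (rk q u == k)%:R * #|fib u (t u)|%:R.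
Proof.
transitivity (\sum_(c in Kn n) Zc (shift w x c) k).
  rewrite (eq_bigr (fun _ => TT q m n n k)) => [|c hc]; last by rewrite IH // full.
  by rewrite sumr_const card_Kn -(mulr_natl (TT q m n n k)) natrX.
rewrite /Zc exchange_big /=; apply: eq_bigr => u _.
rewrite /fib card_sum mulr_sumr; apply: eq_bigr => c _.
rewrite dotp_shift2 solve_x2 //.
by case: (lc u c == t u); case: (rk q u == k); rewrite ?mulr1 ?mulr0 ?mul1r ?mul0r.
Qed.

Let step3 k : Mk k = Q ^+ k * TT q m n n k.
Proof.
apply: (mulfI (expf_neq0 n (Q0 (ltnW hq)))).
rewrite mulrCA step2 /Mk !mulr_sumr; apply: eq_bigr => u _.
case: (eqVneq (rk q u) k) => [<-|ne]; last by rewrite ?(negPf ne) andbF mul0r !mulr0.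
by rewrite ?eqxx andbT mul1r [RHS]mulrC fib_card mulrC.
Qed.

Lemma ZcB_S i : Zc (ext j w x) i.+1 =
  Q ^+ i.+1 * TT q m n n i.+1 + (aa q m n i - Q ^+ i * TT q m n n i).
Proof.
rewrite step1 -!step3 -IHN /Mk -sumrB -big_split; apply: eq_bigr => u _ /=.
rewrite eqSS; case: (t u \in span u) => /=; last by rewrite subr0 add0r.
by rewrite subrr addr0.
Qed.

Lemma ZcB_0 : Zc (ext j w x) 0 = TT q m n n 0.
Proof.
rewrite step1 -[RHS]mul1r -(expr0 Q) -step3 /Mk; apply: eq_bigr => u _ /=.
by case: (t u \in span u).
Qed.
End CaseB.
Let hq0 : (0 < q)%N := ltnW hq.

Lemma span0 n : span (0 : {ffun 'I_n -> F}) = [set 0].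
Proof.
apply/setP => z; rewrite inE; apply/imsetP/eqP => [[c _ ->]|->].
  by rewrite /lc big1 // => k _; rewrite ffunE mulr0.
by exists 0; [exact: Kn0 | rewrite /lc big1 // => k _; rewrite !ffunE mulr0].
Qed.

Lemma rk0 n : rk q (0 : {ffun 'I_n -> F}) = 0%N.
Proof. by apply: expq_inj; rewrite rk_span span0 cards1. Qed.

Lemma ZcN n k : Zc (0 : {ffun 'I_n -> F}) k = \sum_(u : {ffun 'I_n -> F}) (rk q u == k)%:R.
Proof.
apply: eq_bigr => u _.
have -> : dotp u 0 = 0 by rewrite /dotp big1 // => i _; rewrite ffunE mulr0.
by rewrite eqxx.
Qed.

Lemma dep_exists n (v : {ffun 'I_n.+1 -> F}) :
  rk q v != n.+1 -> [exists j, v j \in span (rem j v)].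
Proof.
apply: contraR => /existsPn hn.
rewrite eqn_leq rk_le /=.
have : coords_indep q v [set: 'I_n.+1].
  apply/forallP => c; apply/implyP => /andP[/forall_inP hc /eqP hs].
  apply/forall_inP => k _; apply/eqP; apply: contraNeq (hn k) => ck.
  have cK i : c i \in K by rewrite inE; apply: hc; rewrite inE.
  have hs' : \sum_i c i * v i = 0.
    by move: hs; rewrite (eq_bigl xpredT) // => i; rewrite in_setT.
  rewrite (sum_lift k) in hs'.
  apply/imsetP; exists (fscal (- (c k)^-1) (rem k c)).
    apply: Kn_scal; first by apply/KN/KV.
    by apply/KnP => i; rewrite ffunE.
  rewrite lc_scal /lc.
  have -> : \sum_i rem k c i * rem k v i = - (c k * v k).
    rewrite (eq_bigr (fun l => c (lift k l) * v (lift k l))); last by move=> l _; rewrite !ffunE.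
    by apply/eqP; rewrite -addr_eq0 addrC hs'.
  by rewrite mulNr mulrN opprK mulrA mulVf // mul1r.
move=> hind.
have := @leq_bigmax_cond _ (coords_indep q v) (fun T : {set 'I_n.+1} => #|T|) _ hind.
by rewrite -/(rk q v) cardsT card_ord.
Qed.

Theorem main_count n (v : {ffun 'I_n -> F}) i : Zc v i = TT q m n (rk q v) i.
Proof.
elim: n v i => [|n IH] v i.
  have rv : rk q v = 0%N by apply/eqP; rewrite -leqn0 rk_le.
  rewrite rv (TT_0 hq0) /Zc (big_pred1 (0 : {ffun 'I_0 -> F})); last first.
    by move=> u; apply/esym/eqP/ffunP => -[].
  have -> : dotp (0 : {ffun 'I_0 -> F}) v = 0 by rewrite /dotp big_ord0.
  by rewrite rk0 eqxx /= eq_sym.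
have IHN k : \sum_(u : {ffun 'I_n -> F}) (rk q u == k)%:R = aa q m n k.
  by rewrite -ZcN IH rk0 (TT_N hq0).
case: (eqVneq (rk q v) n.+1) => hv.
  pose j := (ord_max : 'I_n.+1); pose w := rem j v; pose x := v j.
  have ev : v = ext j w x by rewrite ext_rem.
  have hx : x \notin span w.
    apply/negP => hx; move: hv; rewrite ev rk_ext hx => e.
    by have := rk_le w; rewrite e ltnn.
  have hw : rk q w = n by move: hv; rewrite ev rk_ext (negPf hx) => -[].
  have IH' : forall w' : {ffun 'I_n -> F}, rk q w' = n -> forall k, Zc w' k = TT q m n n k.
    by move=> w' hw' k; rewrite IH hw'.
  rewrite hv ev; case: i => [|i].
    by rewrite (ZcB_0 j hx hw IH') (TT_B0 hq0).
  by rewrite (ZcB_S j hx hw IH' IHN) (TT_B hq0).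
have /existsP[j hj] := dep_exists hv.
pose w := rem j v; pose x := v j.
have ev : v = ext j w x by rewrite ext_rem.
have hr : rk q v = rk q w by rewrite ev rk_ext hj.
rewrite hr ev; case: i => [|i].
  by rewrite (ZcA_0 _ hj) IH (TT_A0 hq0) // rk_le.
by rewrite (ZcA_S _ _ hj) !IH (TT_A hq0) // rk_le.
Qed.

End Span.

Theorem proposition16 (F : finFieldType) (q m n : nat)
  (hq : (1 < q)%N) (hm : (0 < m)%N) (hF : #|F| = (q ^ m)%N)
  (v : {ffun 'I_n -> F}) (r : nat) (hr : rk q v = r) :
  forall i : nat,
    hcoef (rank_wenum q (dual_line v)) i m%:Z =
    hcoef (hscale (fun _ => (q%:R : rat) ^- m)
             (hadd (qpow q (hA q) n)
                   (hscale (fun _ => (q%:R : rat) ^+ m - 1)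
                           (qprod q (qpow q (hD) r) (qpow q (hA q) (n - r))))))
          i m%:Z.
Proof.
move=> i.
have hfrob : forall a b : F, (a + b) ^+ q = a ^+ q + b ^+ q := frobD hm hF.
have hK : #|K F q| = q := card_Kq hq hm hF.
rewrite hcoef_hscale hcoef_hadd hcoef_hscale.
change (hcoef (rank_wenum q (dual_line v)) i m = TT q m n r i).
rewrite -hr -(main_count hq hfrob hK hF).
rewrite /hcoef /=; case: ifP => hi.
  rewrite card_sum big_mkcond /=; apply: eq_bigr => u _.
  by rewrite inE; case: (dotp u v == 0).
symmetry; apply: big1 => u _.
have := rk_le hq hfrob hK u.
case: (eqVneq (rk q u) i) => [->|_]; last by rewrite andbF.
by rewrite hi.
Qed.
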